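(* Let $G$ be a network and fix an oriented edge $e$ of $G$. Let $\mathsf{FUSF}_G^e$ denote the joint distribution of a sample $\mathfrak F$ of $\mathsf{FUSF}_G$ and of the update $U(\mathfrak F,e)$. Then for every event $\mathscr A\subseteq\{0,1\}^{E(G)}$, \[ \mathsf{FUSF}_G(\mathfrak F \in \mathscr A) \geq \frac{c(e)}{c(e^-)}\,\mathsf{FUSF}_G^e(U(\mathfrak F,e) \in \mathscr A).\]
   Context: A network is a locally finite connected (infinite) multigraph $G=(V,E)$ with conductances $c:E\to(0,\infty)$; $c(u)$ is the sum of conductances of edges emanating from $u$. For a finite network $H$, $\mathsf{UST}_H$ gives each spanning tree probability proportional to the product of its conductances. For an exhaustion $V_n$, $G_n$ is the induced subnetwork and $\mathsf{FUSF}_G$ the weak limit of $\mathsf{UST}_{G_n}$. For a spanning tree $t$ and non-loop oriented edge $e$, $D(t,e)$ is the first edge on the path from $e^-$ to $e^+$ in $t$; if $T_n\sim\mathsf{UST}_{G_n}$ then $(T_n,D(T_n,e))$ converges in distribution to a pair $(\mathfrak F,D(e))$ with $\mathfrak F\sim\mathsf{FUSF}_G$. The update $U(f,e)$ is: $f$ if $e$ is a self-loop or $e\in f$; otherwise $f\cup\{e\}\setminus D(e)$ with $D(e)$ sampled from its conditional law given $\mathfrak F=f$, independently of everything else. *)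

(* Defs.v *)
From HB Require Import structures.
From mathcomp Require Import all_boot all_order all_algebra.
From mathcomp Require Import all_classical all_reals all_analysis.
Set Implicit Arguments.
Unset Strict Implicit.
Unset Printing Implicit Defensive.
Import Order.TTheory GRing.Theory Num.Theory.

Local Open Scope classical_set_scope.
Local Open Scope ring_scope.

(* Edge types: countable and pointed (pointedness is needed for the
   measurable-space constructions; it is harmless since the theorem fixes an
   edge anyway). *)
HB.structure Definition PointedCount := {T of Pointed T & Countable T}.
Notation pointedCountType := PointedCount.type.

Section Network.
Variables (R : realType) (V : countType) (E : pointedCountType).
(* A multigraph: every edge x has endpoints src x and tgt x (self-loops and
   parallel edges allowed).  Edge sets / configurations are maps E -> bool. *)
Variables (src tgt : E -> V).

Definition joins (d : E) (x z : V) : Prop :=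
  (src d = x /\ tgt d = z) \/ (src d = z /\ tgt d = x).

(* a walk from x using only edges in S: list of (edge, next vertex) *)
Fixpoint walk (S : E -> bool) (x : V) (p : seq (E * V)) : Prop :=
  match p with
  | [::] => True
  | (d, z) :: p' => S d /\ joins d x z /\ walk S z p'
  end.

Definition walk_end (x : V) (p : seq (E * V)) : V := last x (unzip2 p).

Definition has_cycle (S : E -> bool) : Prop :=
  exists (x : V) (p : seq (E * V)),
    p != [::] /\ walk S x p /\ walk_end x p = x /\
    uniq (unzip1 p) /\ uniq (unzip2 p).

Definition connected_on (S : E -> bool) (W : V -> Prop) : Prop :=
  forall u v, W u -> W v -> exists p, walk S u p /\ walk_end u p = v.

(* Network hypotheses: positive conductances, locally finite (adj u lists,
   without repetition, exactly the edges incident to u), connected, infinite *)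
Definition is_network (c : E -> R) (adj : V -> seq E) : Prop :=
  [/\ forall x, 0 < c x,
      forall u, uniq (adj u) /\
                forall x, (x \in adj u) = (src x == u) || (tgt x == u),
      connected_on (fun _ => true) (fun _ => True)
    & ~ exists s : seq V, forall v, v \in s].

(* c(u): sum of conductances of the edges at u (a self-loop counted once) *)
Definition cond (c : E -> R) (adj : V -> seq E) (u : V) : R :=
  \sum_(x <- adj u) c x.

Definition induced (W : seq V) (x : E) : bool := (src x \in W) && (tgt x \in W).

Definition is_exhaustion (Vn : nat -> seq V) : Prop :=
  [/\ forall n v, v \in Vn n -> v \in Vn n.+1,
      forall v, exists n, v \in Vn n
    & forall n, connected_on (induced (Vn n)) (fun v => v \in Vn n)].

Definition induced_edges (adj : V -> seq E) (W : seq V) : seq E :=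
  undup [seq x <- flatten [seq adj u | u <- W] | induced W x].

Definition is_spanning_tree (W : seq V) (S : E -> bool) : Prop :=
  [/\ forall x, S x -> induced W x,
      connected_on S (fun v => v \in W)
    & ~ has_cycle S].

Definition cfg_of (s : seq E) (t : {set seq_sub s}) : E -> bool :=
  fun x => [exists y in t, ssval y == x].

(* oriented edge (x, o): tail e^- and head e^+ *)
Definition tail (x : E) (o : bool) : V := if o then src x else tgt x.
Definition head (x : E) (o : bool) : V := if o then tgt x else src x.

Definition first_edge (S : E -> bool) (x y : V) (d : E) : Prop :=
  exists p, [/\ walk S x p, walk_end x p = y, uniq (x :: unzip2 p)
              & ohead (unzip1 p) = Some d].

(* D(t, e) for the oriented edge (e, o); for a self-loop D is irrelevant and
   is set to e by convention *)
Definition Drel (S : E -> bool) (e : E) (o : bool) (d : E) : Prop :=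
  if tail e o == head e o then d = e else first_edge S (tail e o) (head e o) d.

(* update U(f, e) given the value d of D(e) *)
Definition update (e : E) (o : bool) (f : E -> bool) (d : E) : E -> bool :=
  if (tail e o == head e o) || f e then f
  else fun x => ((x == e) || f x) && (x != d).

End Network.

(* Measurable spaces: {0,1}^E with the product sigma-algebra (generated by
   the coordinate events), and {0,1}^E x E (E discrete). *)
Definition cyl_gen (E : pointedCountType) : set (set (E -> bool)) :=
  fun A => exists (i : E) (b : bool), A = [set f | f i = b].
Definition Cfg (E : pointedCountType) := g_sigma_algebraType (@cyl_gen E).

Definition joint_gen (E : pointedCountType) : set (set ((E -> bool) * E)) :=
  fun A => (exists (i : E) (b : bool), A = [set p | p.1 i = b]) \/
           (exists d : E, A = [set p | p.2 = d]).
Definition JT (E : pointedCountType) := g_sigma_algebraType (@joint_gen E).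

Section UST.
Variables (R : realType) (V : countType) (E : pointedCountType).
Variables (src tgt : E -> V) (c : E -> R) (adj : V -> seq E).

(* UST_{G_W}-probability that B1 is contained in T, B0 is disjoint from T,
   and D(T, e) = d *)
Definition ust_pair_cyl (W : seq V) (e : E) (o : bool) (B1 B0 : seq E) (d : E)
  : R :=
  let s := induced_edges src tgt adj W in
  (\sum_(t : {set seq_sub s} |
      `[< is_spanning_tree src tgt W (cfg_of t) /\
          all (cfg_of t) B1 /\ ~~ has (cfg_of t) B0 /\
          Drel src tgt (cfg_of t) e o d >])
      \prod_(y in t) c (ssval y)) /
  (\sum_(t : {set seq_sub s} | `[< is_spanning_tree src tgt W (cfg_of t) >])
      \prod_(y in t) c (ssval y)).

Definition joint_cyl (B1 B0 : seq E) (d : E) : set (JT E) :=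
  [set p | all p.1 B1 /\ ~~ has p.1 B0 /\ p.2 = d].

(* nu is the law of the limit pair (FUSF sample, D(e)) of
   (T_n, D(T_n, e)), T_n ~ UST_{G_n}: convergence in distribution,
   expressed on the (convergence-determining) cylinder events *)
Definition is_FUSF_pair_limit (Vn : nat -> seq V) (e : E) (o : bool)
  (nu : probability (JT E) R) : Prop :=
  forall (B1 B0 : seq E) (d : E),
    (fun n => (ust_pair_cyl (Vn n) e o B1 B0 d)%:E) @ \oo
      --> nu (joint_cyl B1 B0 d).

End UST.

(* Main.v *)
Require Import Defs.
From HB Require Import structures.
From mathcomp Require Import all_boot all_order all_algebra.
From mathcomp Require Import all_classical all_reals all_analysis.
Import Order.TTheory GRing.Theory Num.Theory.
Local Open Scope classical_set_scope.
Local Open Scope ring_scope.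
Set Implicit Arguments.
Unset Strict Implicit.
Unset Printing Implicit Defensive.

Section Comb.
Variables (V : countType) (E : pointedCountType) (src tgt : E -> V).

Local Notation walk := (walk src tgt).
Local Notation joins := (joins src tgt).
Definition conn (S : E -> bool) (x y : V) := exists p, walk S x p /\ walk_end x p = y.
Definition rmv (S : E -> bool) (d : E) : E -> bool := fun y => S y && (y != d).

Lemma walk_cat (S : E -> bool) x p1 p2 :
  walk S x (p1 ++ p2) <-> walk S x p1 /\ walk S (walk_end x p1) p2.
Proof.
elim: p1 x => [|[d z] p1 IH] x /=; first by split => // [[]].
rewrite IH /walk_end /=; tauto.
Qed.

Lemma walk_end_cat (x : V) (p1 p2 : seq (E * V)) : walk_end x (p1 ++ p2) = walk_end (walk_end x p1) p2.
Proof. by rewrite /walk_end /unzip2 map_cat last_cat. Qed.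

Lemma walk_end_cons (x : V) (d : E) (z : V) (p : seq (E * V)) : walk_end x ((d, z) :: p) = walk_end z p.
Proof. by []. Qed.

Lemma walk_edge (S : E -> bool) x p g : walk S x p -> g \in unzip1 p -> S g.
Proof.
elim: p x => [|[d z] p IH] x //= [Sd [_ W]]; rewrite inE => /orP[/eqP->//|].
exact: IH W.
Qed.

Lemma walk_sub (S S' : E -> bool) x p : walk S x p -> (forall g, g \in unzip1 p -> S' g) -> walk S' x p.
Proof.
elim: p x => [|[d z] p IH] x //= [Sd [J W]] H; split; first by apply: H; rewrite inE eqxx.
split => //; apply: IH W _ => g gp; apply: H; by rewrite inE gp orbT.
Qed.

Lemma walk_mono (S S' : E -> bool) x p : (forall g, S g -> S' g) -> walk S x p -> walk S' x p.
Proof. by move=> H W; apply: (walk_sub W) => g /(walk_edge W) /H. Qed.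

Lemma joins_sym d x z : joins d x z -> joins d z x.
Proof. rewrite /Defs.joins; tauto. Qed.

Lemma joins_st d x z : joins d x z -> (x = src d \/ x = tgt d) /\ (z = src d \/ z = tgt d).
Proof. rewrite /Defs.joins; case=> [[<- <-]|[<- <-]]; tauto. Qed.

Lemma conn_refl (S : E -> bool) x : conn S x x.
Proof. by exists [::]. Qed.

Lemma conn_trans (S : E -> bool) x y z : conn S x y -> conn S y z -> conn S x z.
Proof.
move=> [p [Wp <-]] [q [Wq <-]]; exists (p ++ q); split.
  by apply/walk_cat.
by rewrite walk_end_cat.
Qed.

Lemma conn_edge (S : E -> bool) d x z : S d -> joins d x z -> conn S x z.
Proof. by move=> Sd J; exists [:: (d, z)]. Qed.

Lemma conn_sym (S : E -> bool) x y : conn S x y -> conn S y x.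
Proof.
move=> [p [Wp <-]]; elim: p x Wp => [|[d z] p IH] x /= W; first exact: conn_refl.
case: W => Sd [J W]; apply: conn_trans (IH _ W) _.
exact: conn_edge Sd (joins_sym J).
Qed.

Lemma conn_mono (S S' : E -> bool) x y : (forall g, S g -> S' g) -> conn S x y -> conn S' x y.
Proof. by move=> H [p [W E']]; exists p; split => //; exact: walk_mono W. Qed.

Lemma conn_edges (S S' : E -> bool) x y : (forall g, S g -> conn S' (src g) (tgt g)) ->
  conn S x y -> conn S' x y.
Proof.
move=> H [p [Wp <-]]; elim: p x Wp => [|[d z] p IH] x /= W; first exact: conn_refl.
case: W => Sd [J W]; apply: conn_trans (IH _ W).
have := H _ Sd; case: J => [[<- <-]|[<- <-]] //; exact: conn_sym.
Qed.

Lemma walk_endpoints (S : E -> bool) x p g : walk S x p -> g \in unzip1 p ->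
  (src g \in x :: unzip2 p) && (tgt g \in x :: unzip2 p).
Proof.
elim: p x => [|[d z] p IH] x //= [Sd [J W]]; rewrite inE => /orP[/eqP->|gp].
  by case: J => [[<- <-]|[<- <-]]; rewrite !inE !eqxx ?orbT.
move/andP: (IH _ W gp) => [a b].
by rewrite !(inE) in a b *; rewrite a b !orbT.
Qed.

Lemma walk_prop (P : V -> Prop) (S : E -> bool) x p : walk S x p ->
  (forall g, S g -> P (src g) /\ P (tgt g)) -> P x -> P (walk_end x p).
Proof.
move=> + H; elim: p x => [|[d z] p IH] x //= [Sd [J W]] Px.
apply: IH W _; move: Px; case: J => [[<- <-]|[<- <-]]; have := H _ Sd; tauto.
Qed.

Lemma simple_uniq_edges (S : E -> bool) x p : walk S x p -> uniq (x :: unzip2 p) -> uniq (unzip1 p).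
Proof.
elim: p x => [|[d z] p IH] x //= [Sd [J W]] /andP[xn u].
rewrite (IH _ W u) andbT; apply/negP => dp.
move/andP: (walk_endpoints W dp) => [a b].
case: J => [[e1 _]|[_ e1]]; [move: a | move: b]; rewrite e1 => c; by rewrite c in xn.
Qed.

Lemma shorten (S : E -> bool) x p : walk S x p -> exists q,
  [/\ walk S x q, walk_end x q = walk_end x p, uniq (x :: unzip2 q)
    & {subset unzip1 q <= unzip1 p}].
Proof.
elim: p x => [|[d z] p IH] x /=.
  by move=> _; exists [::]; split.
case=> Sd [J W]; have [q [Wq Eq Uq Sq]] := IH _ W.
rewrite walk_end_cons -Eq.
have [xz|xnz] := eqVneq x z.
  subst z; exists q; split => // g /Sq; rewrite inE => ->; by rewrite orbT.
case: (boolP (x \in unzip2 q)) => xq.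
  set l := unzip2 q; set i := index x l.
  have lt : (i < size l)%N by rewrite index_mem.
  have szl : size l = size q by rewrite /l /unzip2 size_map.
  have Ht : walk_end z (take i.+1 q) = x.
    rewrite /walk_end /unzip2 map_take -/l (take_nth z lt) last_rcons.
    exact: nth_index.
  have Hs := cat_take_drop i.+1 q.
  exists (drop i.+1 q); split.
  - have /walk_cat[_] : walk S z (take i.+1 q ++ drop i.+1 q) by rewrite Hs.
    by rewrite Ht.
  - by rewrite -{2}Hs walk_end_cat Ht.
  - rewrite /= (_ : unzip2 (drop i.+1 q) = drop i.+1 l); last by rewrite /l /unzip2 map_drop.
    have ul : uniq l by case/andP: Uq.
    move: ul; rewrite -{1}(cat_take_drop i.+1 l) cat_uniq => /and3P[_ H1 ->].
    rewrite andbT; apply: contra H1 => xd; apply/hasP; exists x => //.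
    by rewrite (take_nth z lt) mem_rcons inE /i nth_index ?eqxx.
  - move=> g; rewrite /unzip1 map_drop => /mem_drop /Sq gp; by rewrite inE gp orbT.
exists ((d, z) :: q); split => //=.
- by rewrite inE negb_or xnz xq.
- move=> g; rewrite !inE => /orP[->//|/Sq ->]; by rewrite orbT.
Qed.

Lemma loop_cycle (S : E -> bool) d : S d -> src d = tgt d -> has_cycle src tgt S.
Proof.
move=> Sd st; exists (src d), [:: (d, src d)].
split => //; split; first by split => //; split => //; left.
by [].
Qed.

Lemma cycle_of_conn (S : E -> bool) d x z : S d -> joins d x z -> x != z ->
  conn (rmv S d) z x -> has_cycle src tgt S.
Proof.
move=> Sd J xz [p [Wp Ep]].
have [q [Wq Eq Uq Sq]] := shorten Wp.
exists x, ((d, z) :: q); split => //=.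
split; first by split => //; split => //; apply: (walk_mono _ Wq) => g /andP[].
split; first by rewrite walk_end_cons Eq.
split; last exact: Uq.
rewrite (simple_uniq_edges Wq Uq) andbT; apply/negP => /(walk_edge Wq).
by rewrite /rmv eqxx andbF.
Qed.


Lemma cycle_edge (S : E -> bool) : has_cycle src tgt S ->
  exists g x z, [/\ S g, joins g x z & conn (rmv S g) z x].
Proof.
case=> x [p [pn [W [Ee [U1 U2]]]]].
case: p pn W Ee U1 U2 => [//|[g z] p'] _ [Sg [J W']] Ee /= /andP[gn U1] U2.
exists g, x, z; split => //; exists p'; split => //.
apply: (walk_sub W') => h hp; rewrite /rmv (walk_edge W' hp) /=.
by apply: contraNneq gn => <-.
Qed.

Lemma joins_eq d x z a b : joins d x z -> joins d a b ->
  (x = a /\ z = b) \/ (x = b /\ z = a).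
Proof.
rewrite /Defs.joins; case=> [[<- <-]|[<- <-]] [[e1 e2]|[e1 e2]]; rewrite -e1 -e2; tauto.
Qed.

Lemma conn_split (S : E -> bool) e a b x y : joins e a b ->
  conn (fun g => (g == e) || S g) x y ->
  conn S x y \/ (conn S x a /\ conn S b y) \/ (conn S x b /\ conn S a y).
Proof.
move=> Je [p [Wp <-]]; elim: p x Wp => [|[g z] p IH] x /=.
  by move=> _; left; exact: conn_refl.
case=> Sg [J W]; have := IH _ W; rewrite walk_end_cons.
set w := walk_end z p.
have Rx := conn_refl S x.
case/orP: Sg => [/eqP ge|Sg].
  subst g; case: (joins_eq J Je) => [[-> ->]|[-> ->]] {IH J W}.
    case=> [H|[[H1 H2]|[H1 H2]]].
    - by right; left; split => //; exact: conn_refl.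
    - by right; left; split => //; exact: conn_refl.
    - by left.
  case=> [H|[[H1 H2]|[H1 H2]]].
  - by right; right; split => //; exact: conn_refl.
  - by left.
  - by right; right; split => //; exact: conn_refl.
have Cxz : conn S x z by exact: conn_edge Sg J.
case=> [H|[[H1 H2]|[H1 H2]]].
- by left; exact: conn_trans Cxz H.
- by right; left; split => //; exact: conn_trans Cxz H1.
- by right; right; split => //; exact: conn_trans Cxz H1.
Qed.

Lemma joins_loop d x : joins d x x -> src d = tgt d.
Proof. by rewrite /Defs.joins; case=> [[-> ->]|[-> ->]]. Qed.

Definition exch (T : E -> bool) (e d : E) : E -> bool :=
  fun g => ((g == e) || T g) && (g != d).

Section Exchange.
Variables (T : E -> bool) (e d : E) (x0 y0 z1 : V).
Hypotheses (nc : ~ has_cycle src tgt T) (xy : x0 != y0) (Td : T d)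
  (Jd : joins d x0 z1) (Cz : conn (rmv T d) z1 y0) (Je : joins e x0 y0)
  (nTe : ~~ T e).

Lemma ed : e != d.
Proof. by apply: contraNneq nTe => ->. Qed.

Lemma noconn_xy : ~ conn (rmv T d) x0 y0.
Proof.
move=> C; apply: nc.
have [xz|xz] := eqVneq x0 z1.
  subst z1; exact: loop_cycle Td (joins_loop Jd).
apply: (cycle_of_conn Td Jd xz); exact: conn_trans Cz (conn_sym C).
Qed.

Lemma exch_acyclic : ~ has_cycle src tgt (exch T e d).
Proof.
move=> cyc; have [g [x [z [T'g Jg Cg]]]] := cycle_edge cyc.
case/andP: T'g => /orP[/eqP ge | Tg] gd.
  subst g; apply: noconn_xy.
  have Cg' : conn (rmv T d) z x.
    apply: conn_mono Cg => h /andP[/andP[/orP[/eqP->|Th] hd] he].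
      by rewrite eqxx in he.
    by rewrite /rmv Th hd.
  by case: (joins_eq Jg Je) => [[<- <-]|[<- <-]] //; exact: conn_sym.
have ge : g != e by apply: contraNneq nTe => <-.
have [xz|xz] := eqVneq x z.
  by subst z; apply: nc; exact: loop_cycle Tg (joins_loop Jg).
have Cg' : conn (fun h => (h == e) || rmv (rmv T d) g h) z x.
  apply: conn_mono Cg => h /andP[/andP[/orP[/eqP->|Th] hd] hg]; first by rewrite eqxx.
  by rewrite /rmv Th hd hg orbT.
have sub1 h : rmv (rmv T d) g h -> rmv T d h.
  by rewrite /rmv => /andP[/andP[-> ->]].
have Exz : conn (rmv T d) x z.
  by apply: (conn_edge _ Jg); rewrite /rmv Tg gd.
case: (conn_split Je Cg') => [H|[[H1 H2]|[H1 H2]]].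
- apply: nc; apply: (cycle_of_conn Tg Jg xz).
  by apply: conn_mono H => h; rewrite /rmv => /andP[/andP[-> _] ->].
- apply: noconn_xy.
  apply: conn_trans (conn_sym (conn_mono sub1 H1)) _.
  apply: conn_trans (conn_sym Exz) _.
  exact: conn_sym (conn_mono sub1 H2).
- apply: noconn_xy.
  apply: conn_trans (conn_mono sub1 H2) _.
  apply: conn_trans Exz _.
  exact: conn_mono sub1 H1.
Qed.

Lemma exch_conn u v : conn T u v -> conn (exch T e d) u v.
Proof.
apply: conn_edges => f Tf.
have [fd|fd] := eqVneq f d.
  subst f.
  have C1 : conn (exch T e d) x0 z1.
    apply: (@conn_trans _ _ y0).
      by apply: (conn_edge _ Je); rewrite /exch eqxx ed.
    apply: conn_sym; apply: conn_mono Cz => h /andP[Th hd].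
    by rewrite /exch Th hd orbT.
  by case: Jd => [[-> ->]|[-> ->]] //; exact: conn_sym.
by apply: (@conn_edge _ f); [rewrite /exch Tf fd orbT | left].
Qed.
End Exchange.


Lemma walk_avoid (T : E -> bool) g x0 z q : walk T z q ->
  x0 \notin z :: unzip2 q -> (src g == x0) || (tgt g == x0) -> walk (rmv T g) z q.
Proof.
move=> W nx gx; apply: (walk_sub W) => h hq; rewrite /rmv (walk_edge W hq) /=.
apply/eqP => hg; subst h; move/andP: (walk_endpoints W hq) => [a b].
by case/orP: gx => /eqP e1; [move: a|move: b]; rewrite e1 (negbTE nx).
Qed.

Lemma fe_facts (T : E -> bool) x0 y0 d : first_edge src tgt T x0 y0 d ->
  exists z1, [/\ T d, joins d x0 z1 & conn (rmv T d) z1 y0].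
Proof.
case=> p [W Ee U H].
case: p W Ee U H => [//|[g z] q] /= [Tg [J Wq]] Ee U [<-].
exists z; split => //; exists q; split => //.
apply: (walk_avoid (x0:=x0) Wq); first by case/and3P: U.
by case: J => [[-> _]|[_ ->]]; rewrite eqxx ?orbT.
Qed.

Lemma fe_unique (T : E -> bool) x0 y0 d e : ~ has_cycle src tgt T -> T e ->
  joins e x0 y0 -> x0 != y0 -> first_edge src tgt T x0 y0 d -> d = e.
Proof.
move=> nc Te Je xy [p [W Ee U H]].
apply/eqP; apply/negPn/negP => de; apply: nc.
apply: (cycle_of_conn Te Je xy); apply: conn_sym; exists p; split => //.
case: p W Ee U H => [//|[g z] q] /= [Tg [J Wq]] Ee U [gd]; subst g.
split; first by rewrite /rmv Tg de.
split => //; apply: (walk_avoid (x0:=x0) Wq); first by case/and3P: U.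
by case: Je => [[-> _]|[_ ->]]; rewrite eqxx ?orbT.
Qed.

Lemma fe_edge (T : E -> bool) x0 y0 e : T e -> joins e x0 y0 -> x0 != y0 ->
  first_edge src tgt T x0 y0 e.
Proof.
move=> Te Je xy; exists [:: (e, y0)]; split => //=.
by rewrite inE xy.
Qed.

End Comb.

Section Fin.
Variables (V : countType) (E : pointedCountType) (src tgt : E -> V).
Variables (adj : V -> seq E) (W : seq V).
Hypothesis Hadj : forall u, uniq (adj u) /\
  forall x, (x \in adj u) = (src x == u) || (tgt x == u).

Local Notation s := (induced_edges src tgt adj W).
Local Notation cfg := (@cfg_of E s).

Lemma mem_cfg (t : {set seq_sub s}) (y : seq_sub s) : (y \in t) = cfg t (ssval y).
Proof.
apply/idP/existsP => [yt|[y' /andP[y't /eqP e]]]; first by exists y; rewrite yt eqxx.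
by have -> : y = y' by apply: val_inj.
Qed.

Lemma cfg_inj (t1 t2 : {set seq_sub s}) : cfg t1 =1 cfg t2 -> t1 = t2.
Proof. by move=> H; apply/setP => y; rewrite !mem_cfg H. Qed.

Lemma cfg_in_s (t : {set seq_sub s}) x : cfg t x -> x \in s.
Proof. by case/existsP => y /andP[_ /eqP <-]; exact: ssvalP. Qed.

Lemma in_s x : Defs.induced src tgt W x -> x \in s.
Proof.
move=> ix; rewrite /induced_edges mem_undup mem_filter ix /=.
apply/flatten_mapP; exists (src x); first by case/andP: ix.
by rewrite (Hadj (src x)).2 eqxx.
Qed.

Lemma s_induced x : x \in s -> Defs.induced src tgt W x.
Proof. by rewrite /induced_edges mem_undup mem_filter => /andP[]. Qed.

Definition phi (ye : seq_sub s) (d : E) (t : {set seq_sub s}) : {set seq_sub s} :=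
  ye |: [set y in t | ssval y != d].

Lemma cfg_phi ye d t x :
  cfg (phi ye d t) x = (x == ssval ye) || (cfg t x && (x != d)).
Proof.
apply/existsP/idP => [[y /andP[]]|].
  rewrite !inE => /orP[/eqP->|/andP[yt yd]] /eqP <-; first by rewrite eqxx.
  by rewrite -mem_cfg yt yd orbT.
case/orP => [/eqP->|/andP[/existsP[y /andP[yt /eqP yx]] xd]].
  by exists ye; rewrite !inE !eqxx.
by exists y; rewrite !inE yt yx xd eqxx orbT.
Qed.


Variables (e : E) (o : bool).
Local Notation x0 := (Defs.tail src tgt e o).
Local Notation y0 := (Defs.head src tgt e o).

Lemma joins_e : Defs.joins src tgt e x0 y0.
Proof. by case: o; [left|right]. Qed.

Lemma ST_phi (ye : seq_sub s) d t : ssval ye = e -> x0 != y0 ->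
  is_spanning_tree src tgt W (cfg t) -> ~~ cfg t e ->
  first_edge src tgt (cfg t) x0 y0 d ->
  is_spanning_tree src tgt W (cfg (phi ye d t)).
Proof.
move=> He xy [Hi Hc Ha] nTe Hf.
have [z1 [Td Jd Cz]] := fe_facts Hf.
have ed : e != d by apply: contraNneq nTe => ->.
have -> : cfg (phi ye d t) = exch (cfg t) e d.
  apply: funext => x; rewrite cfg_phi /exch He.
  by case: (eqVneq x e) => [->|] //=; rewrite ed.
split.
- move=> x /andP[/orP[/eqP->|Tx] _]; last exact: Hi.
  by rewrite -He; apply: s_induced; exact: ssvalP.
- move=> u v Hu Hv; have [p Hp] := Hc u v Hu Hv.
  by apply: (exch_conn Td Jd Cz joins_e nTe); exists p.
- exact: (exch_acyclic Ha Td Jd Cz joins_e nTe).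
Qed.

Variables (R : realType) (c : E -> R).

Lemma w_phi (ye : seq_sub s) d t : ssval ye = e -> cfg t d -> ~~ cfg t e ->
  (\prod_(y in phi ye d t) c (ssval y)) * c d = (\prod_(y in t) c (ssval y)) * c e.
Proof.
move=> He Td nTe.
have [yd ydt yde] : exists2 yd, yd \in t & ssval yd = d.
  by case/existsP: Td => y /andP[yt /eqP yd]; exists y.
rewrite /phi big_setU1 /=; last by rewrite inE mem_cfg He (negbTE nTe).
rewrite (big_setD1 yd ydt) /=.
have -> : t :\ yd = [set y in t | ssval y != d].
  have inj : injective (@ssval _ s) := val_inj.
  by apply/setP => y; rewrite !inE andbC -yde (inj_eq inj).
rewrite He yde.
by rewrite -!mulrA [_ * c d]mulrC [_ * c e]mulrC !mulrA [c e * c d]mulrC.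
Qed.


Lemma sum_sub (I : finType) (P Q : pred I) (F : I -> R) :
  (forall i, P i -> Q i) -> (forall i, Q i -> 0 <= F i) ->
  \sum_(i | P i) F i <= \sum_(i | Q i) F i.
Proof.
move=> PQ F0; rewrite [X in X <= _]big_mkcond [X in _ <= X]big_mkcond.
apply: ler_sum => i _; case: (boolP (P i)) => Pi; first by rewrite (PQ _ Pi).
by case: (boolP (Q i)) => Qi //; exact: F0.
Qed.

Lemma term_le_sum (I : eqType) (r : seq I) (P : pred I) (F : I -> R) j :
  j \in r -> P j -> (forall i, P i -> 0 <= F i) -> F j <= \sum_(i <- r | P i) F i.
Proof.
move=> jr Pj F0; rewrite (big_rem _ jr) Pj lerDl.
exact: sumr_ge0.
Qed.

Definition wt (t : {set seq_sub s}) : R := \prod_(y in t) c (ssval y).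
Definition STb (t : {set seq_sub s}) : bool :=
  `[< is_spanning_tree src tgt W (cfg t) >].
Definition Dr (t : {set seq_sub s}) d : Prop := Drel src tgt (cfg t) e o d.
Definition upd (t : {set seq_sub s}) d : E -> bool := update src tgt e o (cfg t) d.

Hypothesis cpos : forall x, 0 < c x.

Lemma wt_ge0 t : 0 <= wt t.
Proof. by apply: prodr_ge0 => y _; exact: ltW. Qed.

Lemma e_in_L : e \in adj x0.
Proof. by rewrite (Hadj x0).2; case: o; rewrite eqxx ?orbT. Qed.

Lemma cond_split : cond c adj x0 = c e + \sum_(d <- adj x0 | d != e) c d.
Proof. by rewrite /cond (bigD1_seq e e_in_L (Hadj x0).1). Qed.

Section NonLoop.
Hypothesis xy : x0 != y0.

Lemma Dr_fe t d : Dr t d <-> first_edge src tgt (cfg t) x0 y0 d.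
Proof. by rewrite /Dr /Drel (negbTE xy). Qed.

Lemma upd_e t d : cfg t e -> upd t d = cfg t.
Proof. by move=> Te; rewrite /upd /update Te orbT. Qed.

Lemma upd_ne t d : ~~ cfg t e -> upd t d = fun x => ((x == e) || cfg t x) && (x != d).
Proof. by move=> nTe; rewrite /upd /update (negbTE nTe) (negbTE xy). Qed.

Variable A : (E -> bool) -> Prop.

Let M := \sum_(t | STb t && cfg t e && `[< A (cfg t) >]) wt t.

Lemma part2 d : d \in adj x0 ->
  c e * (\sum_(t | STb t && ~~ cfg t e && `[< Dr t d /\ A (upd t d) >]) wt t)
  <= (if d != e then c d else 0) * M.
Proof.
move=> dL.
have M0 : 0 <= M by apply: sumr_ge0 => t _; exact: wt_ge0.
case: (eqVneq d e) => [->|de] /=.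
  rewrite big_pred0 ?mulr0 ?mul0r // => t.
  apply/negP => /andP[/andP[_ nTe] /asboolP[/Dr_fe Hf _]].
  by have [z1 [Te _ _]] := fe_facts Hf; rewrite Te in nTe.
pose P := fun t => STb t && ~~ cfg t e && `[< Dr t d /\ A (upd t d) >].
case: (pickP P) => [t0 Pt0|P0]; last first.
  rewrite big_pred0 ?mulr0 //; apply: mulr_ge0 => //; exact: ltW.
have e_s : e \in s.
  case/andP: Pt0 => /andP[/asboolP[Hi _ _] _] /asboolP[/Dr_fe Hf _].
  have [z1 [Td Jd Cz]] := fe_facts Hf.
  have iW : forall g, cfg t0 g -> (src g \in W) /\ (tgt g \in W).
    by move=> g /Hi /andP[].
  have x0W : x0 \in W.
    by have [] := iW _ Td; case: Jd => [[-> _]|[_ ->]].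
  have z1W : z1 \in W.
    by have [] := iW _ Td; case: Jd => [[_ ->]|[-> _]].
  have y0W : y0 \in W.
    case: Cz => p [Wp <-]; apply: (walk_prop (P := fun v => v \in W) Wp) => //.
    by move=> g /andP[/iW].
  by apply: in_s; rewrite /Defs.induced; case: o x0W y0W => /= -> ->.
pose ye := SeqSub e_s.
have Hye : ssval ye = e by [].
have PP t : P t -> [/\ STb t, ~~ cfg t e, first_edge src tgt (cfg t) x0 y0 d
                    & A (upd t d)].
  by case/andP => /andP[-> ->] /asboolP[/Dr_fe ? ?].
have Hw t : P t -> c e * wt t = c d * wt (phi ye d t).
  case/PP => _ nTe Hf _; have [z1 [Td _ _]] := fe_facts Hf.
  by rewrite mulrC -(w_phi Hye Td nTe) mulrC.
have cfgphi t : ~~ cfg t e -> cfg (phi ye d t) = upd t d.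
  move=> nTe; rewrite (upd_ne _ nTe); apply: funext => x; rewrite cfg_phi Hye.
  by case: (eqVneq x e) => [->|] //=; rewrite eq_sym de.
rewrite mulr_sumr (eq_bigr _ Hw) -mulr_sumr ler_wpM2l //; first exact: ltW.
rewrite -(big_imset (fun t => wt t)) /=; last first.
  move=> t1 t2 P1 P2 Eq; apply: cfg_inj => x.
  case/PP: P1 => _ nT1 H1 _; case/PP: P2 => _ nT2 H2 _.
  have [z1 [Td1 _ _]] := fe_facts H1; have [z2 [Td2 _ _]] := fe_facts H2.
  case: (eqVneq x d) => [->|xd]; first by rewrite Td1 Td2.
  case: (eqVneq x e) => [->|xe]; first by rewrite (negbTE nT1) (negbTE nT2).
  have := congr1 (fun t => cfg t x) Eq; rewrite /= !cfg_phi Hye.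
  by rewrite (negbTE xe) xd !andbT.
apply: sum_sub => [t' /imsetP[t Pt ->]|t' _]; last exact: wt_ge0.
case/PP: (Pt) => Ht nTe Hf HA.
have [z1 [Td _ _]] := fe_facts Hf.
apply/andP; split; first (apply/andP; split).
- by apply/asboolP; apply: ST_phi Hye xy _ nTe Hf; apply/asboolP.
- by rewrite cfg_phi Hye eqxx.
- by apply/asboolP; rewrite cfgphi.
Qed.


Lemma finite_ineq :
  c e * (\sum_(t | STb t) \sum_(d <- adj x0 | `[< Dr t d /\ A (upd t d) >]) wt t)
  <= cond c adj x0 * (\sum_(t | STb t) \sum_(d <- adj x0 | `[< Dr t d /\ A (cfg t) >]) wt t).
Proof.
set L := adj x0.
set RI := fun t => \sum_(d <- L | `[< Dr t d /\ A (cfg t) >]) wt t.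
set R1 := \sum_(t | STb t && cfg t e) RI t.
have RI0 t : 0 <= RI t by apply: sumr_ge0 => *; exact: wt_ge0.
have R10 : 0 <= R1 by apply: sumr_ge0.
rewrite (bigID (fun t => cfg t e)) /=.
have -> : \sum_(t | STb t && cfg t e)
    \sum_(d <- L | `[< Dr t d /\ A (upd t d) >]) wt t = R1.
  apply: eq_bigr => t /andP[_ Te]; apply: eq_bigl => d.
  by rewrite (upd_e _ Te).
have E2 : \sum_(t | STb t && ~~ cfg t e)
    \sum_(d <- L | `[< Dr t d /\ A (upd t d) >]) wt t =
  \sum_(d <- L) \sum_(t | STb t && ~~ cfg t e && `[< Dr t d /\ A (upd t d) >]) wt t.
  rewrite (eq_bigr (fun t => \sum_(d <- L) (if `[< Dr t d /\ A (upd t d) >]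
      then wt t else 0))); last by move=> t _; rewrite big_mkcond.
  rewrite exchange_big; apply: eq_bigr => d _; by rewrite [RHS]big_mkcondr.
have ce0 : 0 <= c e by exact: ltW.
have E3 : c e * \sum_(d <- L)
   \sum_(t | STb t && ~~ cfg t e && `[< Dr t d /\ A (upd t d) >]) wt t
   <= (cond c adj x0 - c e) * M.
  rewrite mulr_sumr cond_split [c e + _]addrC addrK mulr_suml.
  rewrite [X in _ <= X]big_mkcond /= [X in X <= _]big_seq [X in _ <= X]big_seq.
  apply: ler_sum => d dL; apply: le_trans (part2 dL) _.
  by case: (d != e); rewrite ?mul0r.
have E5 : M <= R1.
  rewrite /M big_mkcondr; apply: ler_sum => t /andP[Ht Te].
  case: asboolP => HA; last exact: RI0.
  apply: (term_le_sum (F := fun _ => wt t)) e_in_L _ (fun _ _ => wt_ge0 t).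
  by apply/asboolP; split => //; apply/Dr_fe; exact: fe_edge joins_e xy.
have E6 : R1 <= \sum_(t | STb t) RI t.
  by rewrite [X in _ <= X](bigID (fun t => cfg t e)) /= lerDl; apply: sumr_ge0.
have Sc : 0 <= cond c adj x0 - c e.
  by rewrite cond_split [c e + _]addrC addrK; apply: sumr_ge0 => *; exact: ltW.
rewrite E2 mulrDr.
apply: (@le_trans _ _ (c e * R1 + (cond c adj x0 - c e) * R1)).
  rewrite lerD2l; apply: le_trans E3 _; exact: ler_wpM2l.
rewrite -mulrDl addrC subrK; apply: ler_wpM2l => //.
by rewrite cond_split; apply: addr_ge0 => //; apply: sumr_ge0 => *; exact: ltW.
Qed.

End NonLoop.

End Fin.

Section Lim.
Variables (R : realType) (V : countType) (E : pointedCountType).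
Variables (src tgt : E -> V) (c : E -> R) (adj : V -> seq E).
Hypothesis Hadj : forall u, uniq (adj u) /\
  forall x, (x \in adj u) = (src x == u) || (tgt x == u).
Hypothesis cpos : forall x, 0 < c x.
Variables (e : E) (o : bool).
Local Notation x0 := (Defs.tail src tgt e o).
Local Notation y0 := (Defs.head src tgt e o).
Hypothesis xy : x0 != y0.
Local Notation L := (adj x0).

Definition num (W : seq V) (X : set (JT E)) : R :=
  \sum_(t : {set seq_sub (induced_edges src tgt adj W)} | STb t)
     \sum_(d <- L | `[< Dr e o t d /\ X (cfg_of t, d) >]) wt c t.
Definition den (W : seq V) : R :=
  \sum_(t : {set seq_sub (induced_edges src tgt adj W)} | STb t) wt c t.
Definition mu W X := num W X / den W.

Lemma Dr_L W (t : {set seq_sub (induced_edges src tgt adj W)}) d :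
  Dr e o t d -> d \in L.
Proof.
move=> /(Dr_fe xy) /fe_facts [z1 [_ J _]].
by rewrite (Hadj x0).2; case: J => [[-> _]|[_ ->]]; rewrite eqxx ?orbT.
Qed.

Lemma mu_cyl W B1 B0 d :
  mu W (joint_cyl B1 B0 d) = ust_pair_cyl src tgt c adj W e o B1 B0 d.
Proof.
rewrite /mu /ust_pair_cyl /den; congr (_ / _).
rewrite /num big_mkcond [RHS]big_mkcond; apply: eq_bigr => t _.
rewrite /STb; case: asboolP => Ht; last first.
  by rewrite asboolF // => -[].
have -> : `[< is_spanning_tree src tgt W (cfg_of t) /\ all (cfg_of t) B1 /\
     ~~ has (cfg_of t) B0 /\ Drel src tgt (cfg_of t) e o d >] =
    `[< all (cfg_of t) B1 /\ ~~ has (cfg_of t) B0 /\ Dr e o t d >].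
  by apply/asboolP/asboolP => [[_ H]|H].
rewrite big_mkcond /=.
case: asboolP => [[H1 [H0 HD]]|HN].
  rewrite (bigD1_seq d (Dr_L HD) (Hadj x0).1) /= asboolT //.
  rewrite big1 ?addr0 // => d' d'd; rewrite asboolF // => -[_ [_ [_ /= e']]].
  by rewrite e' eqxx in d'd.
rewrite big1 // => d' _; rewrite asboolF // => -[HD [H1 [H0 /= e']]].
by apply: HN; subst d'.
Qed.

Lemma mu_set0 W : mu W set0 = 0.
Proof.
rewrite /mu /num big1 ?mul0r // => t _; rewrite big1 // => d.
by rewrite asboolF // => -[].
Qed.

Lemma mu_U W (X Y : set (JT E)) : X `&` Y = set0 -> mu W (X `|` Y) = mu W X + mu W Y.
Proof.
move=> XY; rewrite /mu -mulrDl; congr (_ / _).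
rewrite /num -big_split; apply: eq_bigr => t _.
rewrite big_mkcond [X in _ = X + _]big_mkcond [X in _ = _ + X]big_mkcond -big_split.
apply: eq_bigr => d _ /=.
have nXY : ~ (X (cfg_of t, d) /\ Y (cfg_of t, d)).
  by move=> H; have : (X `&` Y) (cfg_of t, d) by []; rewrite XY.
case: (asboolP (Dr e o t d /\ X (cfg_of t, d))) => HX;
case: (asboolP (Dr e o t d /\ Y (cfg_of t, d))) => HY.
- by case: nXY; split; [case: HX|case: HY].
- by rewrite asboolT ?addr0 //; case: HX => ? ?; split => //; left.
- by rewrite asboolT ?add0r //; case: HY => ? ?; split => //; right.
- rewrite asboolF ?addr0 // => -[HD [HX'|HY']]; [exact: HX|exact: HY].
Qed.


Lemma mgen1 i b : measurable [set p : JT E | p.1 i = b].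
Proof. by apply: sub_sigma_algebra; left; exists i, b. Qed.

Lemma mgen2 d : measurable [set p : JT E | p.2 = d].
Proof. by apply: sub_sigma_algebra; right; exists d. Qed.

Lemma m_cyl (B1 B0 : seq E) (d : E) : measurable (joint_cyl B1 B0 d).
Proof.
elim: B1 => [|x B1 IH].
  elim: B0 => [|x B0 IH].
    rewrite (_ : joint_cyl [::] [::] d = [set p : JT E | p.2 = d]); first exact: mgen2.
    by apply/funext => p; apply/propext; rewrite /joint_cyl /=; split => [[_ [_ ->]]|->].
  rewrite (_ : joint_cyl [::] (x :: B0) d = [set p : JT E | p.1 x = false] `&` joint_cyl [::] B0 d).
    exact: measurableI (mgen1 _ _) IH.
  apply/funext => p; apply/propext; rewrite /joint_cyl /setI /=.
  by case: (p.1 x) => /=; split => [[H1 [H0 H2]]|[H3 [H1 [H0 H2]]]].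
rewrite (_ : joint_cyl (x :: B1) B0 d = [set p : JT E | p.1 x = true] `&` joint_cyl B1 B0 d).
  exact: measurableI (mgen1 _ _) IH.
apply/funext => p; apply/propext; rewrite /joint_cyl /setI /=.
by case: (p.1 x) => /=; split => [[H1 [H0 H2]]|[H3 [H1 [H0 H2]]]].
Qed.

Variables (Vn : nat -> seq V) (nu : probability (JT E) R).
Hypothesis Hnu : is_FUSF_pair_limit src tgt c adj Vn e o nu.

Definition Conv (X : set (JT E)) :=
  measurable X /\ ((fun n => mu (Vn n) X) @ \oo --> (fine (nu X) : R^o)).

Lemma nu_fin X : measurable X -> nu X \is a fin_num.
Proof. by move=> mX; rewrite fin_num_measure. Qed.

Lemma conv_cyl (B1 B0 : seq E) (d : E) : Conv (joint_cyl B1 B0 d).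
Proof.
split; first exact: m_cyl.
have H := @Hnu B1 B0 d; rewrite -(fineK (nu_fin (m_cyl B1 B0 d))) in H.
have /fine_cvgP[_ H2] := H.
by move: H2; rewrite /comp /=; under eq_fun do rewrite -mu_cyl.
Qed.

Lemma conv_set0 : Conv set0.
Proof.
split => //; rewrite measure0 /=.
have -> : (fun n => mu (Vn n) set0) = (fun=> 0) by apply/funext => n; exact: mu_set0.
exact: (@cvg_cst R^o).
Qed.

Lemma conv_U X Y : Conv X -> Conv Y -> X `&` Y = set0 -> Conv (X `|` Y).
Proof.
move=> [mX cX] [mY cY] XY; split; first exact: measurableU.
rewrite measureU // fineD ?nu_fin //.
have -> : (fun n => mu (Vn n) (X `|` Y)) = (fun n => mu (Vn n) X + mu (Vn n) Y).
  by apply/funext => n; exact: mu_U.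
exact: cvgD.
Qed.


Definition dep (K : seq E) (Q : (E -> bool) -> Prop) :=
  forall f g, (forall x, x \in K -> f x = g x) -> Q f -> Q g.

Lemma conv_K (K : seq E) : forall (Q : (E -> bool) -> Prop), dep K Q ->
  forall (B1 B0 : seq E) (d : E),
  Conv [set p : JT E | all p.1 B1 /\ ~~ has p.1 B0 /\ Q p.1 /\ p.2 = d].
Proof.
elim: K => [|x K IH] Q HQ B1 B0 d.
  case: (pselect (Q (fun _ => false))) => Hq.
    have -> : [set p : JT E | all p.1 B1 /\ ~~ has p.1 B0 /\ Q p.1 /\ p.2 = d]
        = joint_cyl B1 B0 d.
      apply/funext => p; apply/propext; rewrite /joint_cyl /=.
      split => [[H1 [H0 [_ H2]]]|[H1 [H0 H2]]] //; do !split => //.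
      exact: HQ Hq.
    exact: conv_cyl.
  have -> : [set p : JT E | all p.1 B1 /\ ~~ has p.1 B0 /\ Q p.1 /\ p.2 = d]
      = set0.
    apply/funext => p; apply/propext; split => [[_ [_ [Hp _]]]|] //.
    by apply: Hq; apply: HQ Hp.
  exact: conv_set0.
pose ft (b : bool) (f : E -> bool) := fun y => if y == x then b else f y.
have eqt f : ft (f x) f = f by apply/funext => y; rewrite /ft; case: eqP => // ->.
have depb b : dep K (fun f => Q (ft b f)).
  move=> f g Hfg; apply: HQ => y; rewrite inE /ft; case: eqP => //= _.
  exact: Hfg.
have Ht := IH _ (depb true) (x :: B1) B0 d.
have Hf := IH _ (depb false) B1 (x :: B0) d.
set S := [set p : JT E | _].
set St := [set p : JT E | _] in Ht.
set Sf := [set p : JT E | _] in Hf.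
have -> : S = St `|` Sf.
  apply/funext => p; apply/propext; rewrite /S /St /Sf /setU /=.
  have := eqt p.1; case: (p.1 x) => /= ->.
    by split => [H|[H|[_ [F _]]]] //; left.
  by split => [H|[[F _]|H]] //; right.
apply: conv_U Ht Hf _; apply/funext => p; apply/propext; split => //.
rewrite /St /Sf /setI /=; case: (p.1 x) => /=.
  by move=> [_ [_ [F _]]].
by move=> [[F _] _].
Qed.


Lemma conv_L K (Q : (E -> bool) -> E -> Prop) : (forall d, dep K (fun f => Q f d)) ->
  forall l : seq E, uniq l -> Conv [set p : JT E | p.2 \in l /\ Q p.1 p.2].
Proof.
move=> HQ; elim => [|d l IH] /=.
  move=> _; have -> : [set p : JT E | p.2 \in [::] /\ Q p.1 p.2] = set0.
    by apply/funext => p; apply/propext; split => -[].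
  exact: conv_set0.
case/andP => dl ul.
have -> : [set p : JT E | p.2 \in d :: l /\ Q p.1 p.2] =
  [set p : JT E | all p.1 [::] /\ ~~ has p.1 [::] /\ Q p.1 d /\ p.2 = d] `|`
  [set p : JT E | p.2 \in l /\ Q p.1 p.2].
  apply/funext => p; apply/propext; rewrite /setU /= inE.
  split => [[/orP[/eqP pd|pl] Hq]|[[_ [_ [Hq pd]]]|[pl Hq]]].
  - by left; rewrite -pd.
  - by right.
  - by rewrite pd eqxx; split => //; rewrite pd in Hq.
  - by rewrite pl orbT.
apply: conv_U (conv_K (HQ d) [::] [::] d) (IH ul) _.
apply/funext => p; apply/propext; split => // -[[_ [_ [_ pd]]] [pl _]].
by rewrite -pd pl in dl.
Qed.

Lemma meas_Q K (Q : (E -> bool) -> E -> Prop) : (forall d, dep K (fun f => Q f d)) ->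
  measurable [set p : JT E | Q p.1 p.2].
Proof.
move=> HQ.
pose F n : set (JT E) := if unpickle n is Some d then
  [set p : JT E | all p.1 [::] /\ ~~ has p.1 [::] /\ Q p.1 d /\ p.2 = d] else set0.
have -> : [set p : JT E | Q p.1 p.2] = \bigcup_n F n.
  apply/funext => p; apply/propext; split.
    move=> Hq; exists (pickle p.2) => //; rewrite /F pickleK /=; by split.
  case=> n _; rewrite /F; case: (unpickle n) => // d [_ [_ [Hq pd]]].
  by rewrite /= pd.
apply: bigcupT_measurable => n; rewrite /F; case: (unpickle n) => // d.
exact: (conv_K (HQ d) [::] [::] d).1.
Qed.

Lemma nu_out d : d \notin L -> nu (joint_cyl [::] [::] d) = 0%E.
Proof.
move=> dL.
have [mJ H] := conv_cyl [::] [::] d.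
have Z n : mu (Vn n) (joint_cyl [::] [::] d) = 0.
  rewrite /mu /num big1 ?mul0r // => t _; rewrite big1 // => d'.
  move/asboolP => [/Dr_L HL [_ [_ /= e']]].
  by rewrite -e' HL in dL.
have {}H : (fun=> 0 : R^o) @ \oo --> (fine (nu (joint_cyl [::] [::] d)) : R^o).
  by move: H; have -> : (fun n => mu (Vn n) (joint_cyl [::] [::] d)) = (fun=> 0)
    by apply/funext => n; exact: Z.
have C0 : (fun=> 0 : R^o) @ \oo --> (0 : R^o) by exact: (@cvg_cst R^o).
have le1 := ler_cvg_to C0 H (nearW _ (fun _ => lexx _)).
have le2 := ler_cvg_to H C0 (nearW _ (fun _ => lexx _)).
have : fine (nu (joint_cyl [::] [::] d)) = 0 by apply/eqP; rewrite eq_le le1 le2.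
by move=> Hf; rewrite -(fineK (nu_fin mJ)) Hf.
Qed.

Lemma tight : nu [set p : JT E | p.2 \notin L] = 0%E.
Proof.
pose F n : set (JT E) := if unpickle n is Some d then
  (if d \in L then set0 else joint_cyl [::] [::] d) else set0.
have mF n : measurable (F n).
  by rewrite /F; case: (unpickle n) => // d; case: (d \in L) => //; exact: m_cyl.
have mT : measurable [set p : JT E | p.2 \notin L].
  have := meas_Q (K := [::]) (Q := fun _ d => d \notin L) _.
  by apply => d f g _.
apply/eqP; rewrite eq_le measure_ge0 andbT.
have Hs := @measure_sigma_subadditive _ R _ nu [set p : JT E | p.2 \notin L] F mF mT.
apply: le_trans (Hs _) _.
  move=> p /= pL; exists (pickle p.2) => //; rewrite /F pickleK (negbTE pL).
  by rewrite /joint_cyl.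
rewrite eseries0 // => n _ _; rewrite /F; case Hn: (unpickle n) => [d|].
  by case: ifPn => [_|dL]; [exact: measure0|exact: nu_out].
exact: measure0.
Qed.


Lemma cond_gt0 : 0 < cond c adj x0.
Proof.
rewrite (cond_split Hadj); apply: (lt_le_trans (cpos e)); rewrite lerDl.
by apply: sumr_ge0 => *; exact: ltW.
Qed.

Lemma main_G K (A : (E -> bool) -> Prop) : dep K A ->
  [/\ measurable [set p : JT E | A p.1],
      measurable [set p : JT E | A (update src tgt e o p.1 p.2)] &
      ((c e / cond c adj x0)%:E * nu [set p : JT E | A (update src tgt e o p.1 p.2)]
        <= nu [set p : JT E | A p.1])%E].
Proof.
move=> HA.
have dep1 : forall d : E, dep K (fun f => A f) by move=> d.
have dep2 : forall d : E, dep (e :: K) (fun f => A (update src tgt e o f d)).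
  move=> d f g Hfg; rewrite /update (Hfg e (mem_head _ _)).
  case: ifP => _; apply: HA => x xK; first by apply: Hfg; rewrite inE xK orbT.
  by rewrite Hfg // inE xK orbT.
have mF := meas_Q dep1.
have mU := meas_Q dep2.
split => //.
set X1 := [set p : JT E | p.2 \in L /\ A p.1].
set X2 := [set p : JT E | p.2 \in L /\ A (update src tgt e o p.1 p.2)].
have [m1 c1] : Conv X1 := conv_L dep1 (Hadj x0).1.
have [m2 c2] : Conv X2 := conv_L dep2 (Hadj x0).1.
have ineq n : c e * mu (Vn n) X2 <= cond c adj x0 * mu (Vn n) X1.
  rewrite /mu !mulrA; apply: ler_wpM2r.
    by rewrite invr_ge0; apply: sumr_ge0 => t _; apply: wt_ge0 => x; exact: cpos.
  have E1 : num (Vn n) X1 = \sum_(t : {set seq_sub (induced_edges src tgt adj (Vn n))} | STb t)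
      \sum_(d <- L | `[< Dr e o t d /\ A (cfg_of t) >]) wt c t.
    apply: eq_bigr => t _; apply: eq_bigl => d.
    apply/asboolP/asboolP => [[HD [_ H]]|[HD H]] //; split => //; split => //.
    exact: Dr_L HD.
  have E2 : num (Vn n) X2 = \sum_(t : {set seq_sub (induced_edges src tgt adj (Vn n))} | STb t)
      \sum_(d <- L | `[< Dr e o t d /\ A (upd e o t d) >]) wt c t.
    apply: eq_bigr => t _; apply: eq_bigl => d.
    apply/asboolP/asboolP => [[HD [_ H]]|[HD H]] //; split => //; split => //.
    exact: Dr_L HD.
  rewrite E1 E2; exact: finite_ineq.
have lim : c e * fine (nu X2) <= cond c adj x0 * fine (nu X1).
  apply: (ler_cvg_to (cvgMl_tmp (a := c e) c2) (cvgMl_tmp (a := cond c adj x0) c1)).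
  exact: nearW.
have mT : measurable [set p : JT E | p.2 \notin L].
  have := meas_Q (K := [::]) (Q := fun _ d => d \notin L) _.
  by apply => d f g _.
have H2 : (nu [set p : JT E | A (update src tgt e o p.1 p.2)] <= nu X2)%E.
  apply: le_trans (_ : (nu (X2 `|` [set p : JT E | p.2 \notin L]) <= _)%E).
    apply: le_measure; rewrite ?inE //; first exact: measurableU.
    by move=> p /= Hp; case: (boolP (p.2 \in L)) => pL; [left|right].
  have T0 : (nu [set p : JT E | p.2 \notin L] <= 0)%E by rewrite tight.
  apply: le_trans (measureU2 nu m2 mT) _; rewrite -[leRHS]adde0.
  exact: leeD.
have H1 : (nu X1 <= nu [set p : JT E | A p.1])%E.
  by apply: le_measure; rewrite ?inE // => p [].
have cg := cond_gt0.
apply: le_trans H1; apply: le_trans (lee_wpmul2l _ H2) _.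
  by rewrite lee_fin; apply: divr_ge0; [exact: ltW|exact: ltW].
rewrite -(fineK (nu_fin m2)) -(fineK (nu_fin m1)) -EFinM lee_fin.
by rewrite mulrAC ler_pdivrMr // [fine (nu X1) * _]mulrC.
Qed.

End Lim.

Section Mono.
Variables (R : realType) (E : pointedCountType) (nu : probability (JT E) R).

Lemma nufin (X : set (JT E)) : measurable X -> nu X \is a fin_num.
Proof. by move=> mX; rewrite fin_num_measure. Qed.

Lemma lim_ineq (a b : nat -> set (JT E)) (A B : set (JT E)) (k : R) :
  measurable A -> measurable B -> (forall n, measurable (a n)) ->
  (forall n, measurable (b n)) ->
  nu \o a @ \oo --> nu A -> nu \o b @ \oo --> nu B ->
  (forall n, (k%:E * nu (a n) <= nu (b n))%E) -> (k%:E * nu A <= nu B)%E.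
Proof.
move=> mA mB ma mb ca cb H.
rewrite -(fineK (nufin mA)) in ca; rewrite -(fineK (nufin mB)) in cb.
have /fine_cvgP[_ ca'] := ca; have /fine_cvgP[_ cb'] := cb.
rewrite -(fineK (nufin mA)) -(fineK (nufin mB)) -EFinM lee_fin.
apply: (ler_cvg_to (cvgMl_tmp (a := k) ca') cb').
apply: nearW => n /=; have := H n.
by rewrite -(fineK (nufin (ma n))) -(fineK (nufin (mb n))) -EFinM lee_fin.
Qed.

Variables (P : E -> bool -> E -> bool -> bool) (k : R).
Variable U : (E -> bool) -> E -> (E -> bool).

Definition Mc : set (set (E -> bool)) :=
  [set B | measurable [set p : JT E | B p.1] /\
           measurable [set p : JT E | B (U p.1 p.2)] /\
           (k%:E * nu [set p : JT E | B (U p.1 p.2)] <= nu [set p : JT E | B p.1])%E].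

Lemma Mc_monotone : monotone Mc.
Proof.
split.
  move=> F ndF MF.
  have e1 : [set p : JT E | (\bigcup_i F i) p.1] = \bigcup_i [set p : JT E | F i p.1].
    by apply/funext => p; apply/propext; split => -[i _ H]; exists i.
  have e2 : [set p : JT E | (\bigcup_i F i) (U p.1 p.2)] =
      \bigcup_i [set p : JT E | F i (U p.1 p.2)].
    by apply/funext => p; apply/propext; split => -[i _ H]; exists i.
  have m1 : measurable (\bigcup_i [set p : JT E | F i p.1]).
    by apply: bigcupT_measurable => i; case: (MF i).
  have m2 : measurable (\bigcup_i [set p : JT E | F i (U p.1 p.2)]).
    by apply: bigcupT_measurable => i; case: (MF i) => _ [].
  rewrite /Mc /= e1 e2; split => //; split => //.
  apply: (lim_ineq m2 m1 (fun i => (MF i).2.1) (fun i => (MF i).1)).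
  - apply: nondecreasing_cvg_mu => // [i|m n mn]; first by case: (MF i) => _ [].
    by apply/subsetPset => p /=; have /subsetPset := ndF _ _ mn; apply.
  - apply: nondecreasing_cvg_mu => // [i|m n mn]; first by case: (MF i).
    by apply/subsetPset => p /=; have /subsetPset := ndF _ _ mn; apply.
  - by move=> n; case: (MF n) => _ [].
move=> F niF MF.
have e1 : [set p : JT E | (\bigcap_i F i) p.1] = \bigcap_i [set p : JT E | F i p.1].
  by apply/funext => p; apply/propext; split => H i _; exact: H.
have e2 : [set p : JT E | (\bigcap_i F i) (U p.1 p.2)] =
    \bigcap_i [set p : JT E | F i (U p.1 p.2)].
  by apply/funext => p; apply/propext; split => H i _; exact: H.
have m1 : measurable (\bigcap_i [set p : JT E | F i p.1]).
  by apply: bigcapT_measurable => i; case: (MF i).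
have m2 : measurable (\bigcap_i [set p : JT E | F i (U p.1 p.2)]).
  by apply: bigcapT_measurable => i; case: (MF i) => _ [].
rewrite /Mc /= e1 e2; split => //; split => //.
apply: (lim_ineq m2 m1 (fun i => (MF i).2.1) (fun i => (MF i).1)).
- apply: nonincreasing_cvg_mu => // [|i|m n mn].
  + by have /fin_numPlt/andP[_ ->] := nufin (MF 0%N).2.1.
  + by case: (MF i) => _ [].
  + by apply/subsetPset => p /=; have /subsetPset := niF _ _ mn; apply.
- apply: nonincreasing_cvg_mu => // [|i|m n mn].
  + by have /fin_numPlt/andP[_ ->] := nufin (MF 0%N).1.
  + by case: (MF i).
  + by apply/subsetPset => p /=; have /subsetPset := niF _ _ mn; apply.
- by move=> n; case: (MF n) => _ [].
Qed.
End Mono.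

Lemma setring_Gr (E : pointedCountType) :
  setring [set B : set (E -> bool) | exists K, dep K B].
Proof.
split.
- by exists [::] => f g _.
- move=> B1 B2 [K1 H1] [K2 H2]; exists (K1 ++ K2) => f g H [Hb|Hb].
    by left; apply: H1 Hb => x xK; apply: H; rewrite mem_cat xK.
  by right; apply: H2 Hb => x xK; apply: H; rewrite mem_cat xK orbT.
- move=> B1 B2 [K1 H1] [K2 H2]; exists (K1 ++ K2) => f g H [Hb Hn]; split.
    by apply: H1 Hb => x xK; apply: H; rewrite mem_cat xK.
  move=> Hg; apply: Hn; apply: H2 Hg => x xK; apply/esym; apply: H.
  by rewrite mem_cat xK orbT.
Qed.

Theorem corollary2p4 (R : realType) (V : countType) (E : pointedCountType)
  (src tgt : E -> V) (c : E -> R) (adj : V -> seq E)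
  (Hnet : is_network src tgt c adj)
  (Vn : nat -> seq V) (Hex : is_exhaustion src tgt Vn)
  (e : E) (o : bool)
  (nu : probability (JT E) R)
  (Hnu : is_FUSF_pair_limit src tgt c adj Vn e o nu)
  (A : set (Cfg E)) (HA : measurable A) :
  ((c e / cond c adj (tail src tgt e o))%:E *
     nu [set p | A (update src tgt e o p.1 p.2)]
   <= nu [set p | A p.1])%E.
Proof.
case: Hnet => cpos Hadj _ _.
have cg := cond_gt0 Hadj cpos e o.
case: (eqVneq (Defs.tail src tgt e o) (Defs.head src tgt e o)) => [loop|xy].
  have -> : [set p : JT E | A (update src tgt e o p.1 p.2)] = [set p : JT E | A p.1].
    by apply/funext => p; rewrite /update loop eqxx.
  rewrite -[leRHS]mul1e; apply: lee_wpmul2r => //.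
  rewrite lee_fin ler_pdivrMr // mul1r (cond_split Hadj) lerDl.
  by apply: sumr_ge0 => *; exact: ltW.
pose Gr := [set B : set (E -> bool) | exists K, dep K B].
pose U := update src tgt e o.
have Gsub : Gr `<=` Mc nu (c e / cond c adj (Defs.tail src tgt e o)) U.
  move=> B [K HK]; have [h1 h2 h3] := main_G Hadj cpos xy Hnu HK.
  by split => //; split.
have Hsub := monotone_setring_sub_g_sigma_ring (Mc_monotone nu _ U) (setring_Gr E) Gsub.
have HA' : <<sr Gr>> A.
  apply: (smallest_sub _ _ HA).
    have [s0 sD sU] := smallest_sigma_ring Gr; split => // B HB.
    apply: sD => //; apply: sub_g_sigma_ring; by exists [::] => f g _.
  move=> B [i [b ->]]; apply: sub_g_sigma_ring; exists [:: i] => f g H.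
  by rewrite /= (H i (mem_head _ _)).
by have [_ [_ H]] := Hsub A HA'.
Qed.
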